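(* Let $k\geq1$ be an integer and let $\psi\in\Psi_{2k+2}$. For $d\in\{2,2k+2\}$ let $b_{n,d}$ denote the $d$-dimensional Schoenberg coefficients of $\psi$; in particular $b_{n,2}$ are its Legendre coefficients, i.e. $\psi(\theta)=\sum_{n\ge0}b_{n,2}P_n(\cos\theta)$. Then for every integer $n\ge0$, \[ b_{n,2k+2}=\sum_{i=0}^k u_i(n,k)\,b_{n+2i,2}, \] where \[ u_i(n,k)=(-1)^i\frac{(2k-1)!!}{2^k}\binom{k}{i}\binom{2k+n}{n}\frac{1}{(n+i+1/2)_{(k-i)}\,(n+k+3/2)_{(i)}}. \]
   Context: For an integer $d\ge1$, $\mathbb{S}^d=\{x\in\mathbb{R}^{d+1}:\|x\|=1\}$ and $\theta(x,y)=\arccos(\langle x,y\rangle)$ is the great circle distance. $\Psi_d$ denotes the class of continuous functions $\psi:[0,\pi]\to\mathbb{R}$ with $\psi(0)=1$ such that $(x,y)\mapsto\psi(\theta(x,y))$ is positive definite on $\mathbb{S}^d$, i.e. $\sum_{i,j=1}^m c_ic_j\psi(\theta(x_i,x_j))\ge0$ for all $m\ge1$, all real $c_1,\dots,c_m$ and all distinct $x_1,\dots,x_m\in\mathbb{S}^d$. One has $\Psi_1\supset\Psi_2\supset\cdots$, and (Schoenberg) $\psi\in\Psi_d$ iff $\psi(\theta)=\sum_{n=0}^\infty b_{n,d}\,\frac{C_n^{(d-1)/2}(\cos\theta)}{C_n^{(d-1)/2}(1)}$ for unique coefficients $b_{n,d}\ge0$ with $\sum_n b_{n,d}=1$; these $b_{n,d}$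 are the $d$-dimensional Schoenberg coefficients of $\psi$. Here $C_n^\lambda$ are Gegenbauer polynomials, and $C_n^{1/2}=P_n$ are the Legendre polynomials (with $P_n(1)=1$). Notation: $(2k-1)!!=\prod_{j=1}^k(2j-1)$, and $(x)_{(m)}=x(x+1)\cdots(x+m-1)$ is the Pochhammer symbol (with $(x)_{(0)}=1$). *)

(* Defs.v *)
From Stdlib Require Import Reals Lra Lia.
Open Scope R_scope.

(* Points of R^{d+1} are represented as functions nat -> R; only the
   coordinates 0..d matter. *)
Definition inner (d : nat) (x y : nat -> R) : R :=
  sum_f_R0 (fun l => x l * y l) d.

Definition on_sphere (d : nat) (x : nat -> R) : Prop := inner d x x = 1.

Definition pt_distinct (d : nat) (x y : nat -> R) : Prop :=
  exists l, (l <= d)%nat /\ x l <> y l.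

Definition gcd_dist (d : nat) (x y : nat -> R) : R := acos (inner d x y).

Definition posdef_on_sphere (d : nat) (psi : R -> R) : Prop :=
  forall (m : nat) (c : nat -> R) (x : nat -> nat -> R),
    (1 <= m)%nat ->
    (forall i, (i < m)%nat -> on_sphere d (x i)) ->
    (forall i j, (i < m)%nat -> (j < m)%nat -> i <> j -> pt_distinct d (x i) (x j)) ->
    0 <= sum_f_R0 (fun i => sum_f_R0 (fun j =>
            c i * c j * psi (gcd_dist d (x i) (x j))) (m - 1)) (m - 1).

Definition continuous_on_0_pi (psi : R -> R) : Prop :=
  forall t, 0 <= t <= PI -> forall eps, 0 < eps -> exists delta, 0 < delta /\
    forall s, 0 <= s <= PI -> Rabs (s - t) < delta -> Rabs (psi s - psi t) < eps.

Definition Psi (d : nat) (psi : R -> R) : Prop :=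
  continuous_on_0_pi psi /\ psi 0 = 1 /\ posdef_on_sphere d psi.

(* Gegenbauer polynomials C_n^lam(x) via the three-term recurrence
   n C_n = 2 (n + lam - 1) x C_{n-1} - (n + 2 lam - 2) C_{n-2}. *)
Fixpoint gegen (lam x : R) (n : nat) : R :=
  match n with
  | O => 1
  | S m =>
    match m with
    | O => 2 * lam * x
    | S p => (2 * (INR n + lam - 1) * x * gegen lam x m
              - (INR n + 2 * lam - 2) * gegen lam x p) / INR n
    end
  end.

Definition lam_of (d : nat) : R := (INR d - 1) / 2.

Definition gegen_norm (d : nat) (n : nat) (t : R) : R :=
  gegen (lam_of d) t n / gegen (lam_of d) 1 n.

Definition schoenberg_coeffs (d : nat) (psi : R -> R) (b : nat -> R) : Prop :=
  (forall n, 0 <= b n) /\ infinite_sum b 1 /\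
  forall theta, 0 <= theta <= PI ->
    infinite_sum (fun n => b n * gegen_norm d n (cos theta)) (psi theta).

Fixpoint dfact_odd (k : nat) : nat :=
  match k with O => 1%nat | S j => ((2 * k - 1) * dfact_odd j)%nat end.

Fixpoint poch (x : R) (m : nat) : R :=
  match m with O => 1 | S j => poch x j * (x + INR j) end.

Definition u_coef (i n k : nat) : R :=
  (-1) ^ i * (INR (dfact_odd k) / 2 ^ k) * C k i * C (2 * k + n) n
  / (poch (INR n + INR i + 1/2) (k - i) * poch (INR n + INR k + 3/2) i).

(* Main.v *)
Require Import Defs.
From Coquelicot Require Import Coquelicot.
From Stdlib Require Import Reals Lra Lia Arith Factorial.
Open Scope R_scope.
Ltac inr := repeat rewrite ?plus_INR, ?mult_INR, ?S_INR in *; simpl INR in *.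
Ltac Req := match goal with |- ?a = ?b => change (@eq R a b) end.


Definition cf (lam : R) (j : nat) : R := poch lam j / INR (fact j).

Lemma INR_fact_pos j : 0 < INR (fact j).
Proof. apply lt_0_INR, lt_O_fact. Qed.

Lemma cf_0 lam : cf lam 0 = 1.
Proof. unfold cf; simpl; field. Qed.

Lemma cf_S lam j : cf lam (S j) = cf lam j * (lam + INR j) / INR (S j).
Proof.
  unfold cf. simpl poch. rewrite fact_simpl, mult_INR.
  pose proof (INR_fact_pos j). assert (0 < INR (S j)) by (apply lt_0_INR; lia).
  field; lra.
Qed.

Definition cc (lam : R) (n j : nat) : R :=
  if (j <=? n)%nat then cf lam j * cf lam (n - j) else 0.

Definition Sgr (N : nat) (x : R) (a : nat -> R) (th : R) : R :=
  sum_f_R0 (fun j => a j * cos ((x - 2 * INR j) * th)) N.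

Definition Sf (lam : R) (n : nat) (th : R) : R := Sgr n (INR n) (cc lam n) th.

Definition shiftc (a : nat -> R) (j : nat) : R :=
  match j with O => 0 | S j' => a j' end.

Lemma Sgr_ext N x a b th : (forall j, (j <= N)%nat -> a j = b j) ->
  Sgr N x a th = Sgr N x b th.
Proof. intros H; unfold Sgr; apply sum_eq; intros j Hj; rewrite H; auto. Qed.

Lemma Sgr_x N x y a th : x = y -> Sgr N x a th = Sgr N y a th.
Proof. intros ->; reflexivity. Qed.

Lemma Sgr_extend N x a th : a (S N) = 0 -> Sgr (S N) x a th = Sgr N x a th.
Proof. intros H; unfold Sgr; simpl; rewrite H; ring. Qed.

Lemma Sgr_shift N x a th : Sgr (S N) (x + 2) (shiftc a) th = Sgr N x a th.
Proof.
  unfold Sgr. rewrite decomp_sum by lia. simpl pred. simpl shiftc.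
  rewrite Rmult_0_l, Rplus_0_l. apply sum_eq; intros j _.
  rewrite S_INR. f_equal. f_equal. ring.
Qed.

Lemma cos_term p th : 2 * cos th * cos (p * th) = cos ((p + 1) * th) + cos ((p - 1) * th).
Proof.
  replace ((p + 1) * th) with (p * th + th) by ring.
  replace ((p - 1) * th) with (p * th - th) by ring.
  rewrite cos_plus, cos_minus. ring.
Qed.

Lemma Sgr_cos N x a th :
  2 * cos th * Sgr N x a th = Sgr N (x + 1) a th + Sgr N (x - 1) a th.
Proof.
  unfold Sgr. rewrite <- plus_sum. induction N as [|N IH].
  - cbn [sum_f_R0]. replace (x + 1 - 2 * INR 0) with ((x - 2 * INR 0) + 1) by ring.
    replace (x - 1 - 2 * INR 0) with ((x - 2 * INR 0) - 1) by ring.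
    rewrite <- Rmult_plus_distr_l, <- cos_term. ring.
  - rewrite !tech5, Rmult_plus_distr_l, IH.
    replace (x + 1 - 2 * INR (S N)) with ((x - 2 * INR (S N)) + 1) by ring.
    replace (x - 1 - 2 * INR (S N)) with ((x - 2 * INR (S N)) - 1) by ring.
    rewrite <- Rmult_plus_distr_l, <- cos_term. ring.
Qed.

Lemma Sgr_lin N x a b c1 c2 th :
  c1 * Sgr N x a th + c2 * Sgr N x b th = Sgr N x (fun j => c1 * a j + c2 * b j) th.
Proof.
  unfold Sgr. induction N as [|N IH]; simpl; [ring|].
  rewrite <- IH. ring.
Qed.

Lemma cc_out lam n j : (n < j)%nat -> cc lam n j = 0.
Proof. intros H; unfold cc. destruct (Nat.leb_spec j n); [lia|auto]. Qed.

Lemma cc_in lam n j : (j <= n)%nat -> cc lam n j = cf lam j * cf lam (n - j).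
Proof. intros H; unfold cc. destruct (Nat.leb_spec j n); [auto|lia]. Qed.



Lemma INR_S_pos j : 0 < INR (S j).
Proof. apply lt_0_INR; lia. Qed.

Lemma cc_rec lam n j : (j <= n + 2)%nat ->
  INR (n + 2) * cc lam (n + 2) j =
  (INR (n + 2) + lam - 1) * (cc lam (n + 1) j + shiftc (cc lam (n + 1)) j)
  - (INR (n + 2) + 2 * lam - 2) * shiftc (cc lam n) j.
Proof.
  intros Hj. destruct j as [|j'].
  - simpl shiftc. rewrite !cc_in by lia. rewrite !Nat.sub_0_r.
    replace (n + 2)%nat with (S (S n)) by lia. replace (n + 1)%nat with (S n) by lia.
    rewrite (cf_S lam (S n)). pose proof (INR_S_pos (S n)).
    rewrite cf_0. inr. field. lra.
  - simpl shiftc. destruct (Nat.eq_dec j' (n + 1)) as [->|Hne].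
    + rewrite (cc_out lam (n+1)) by lia. rewrite (cc_out lam n) by lia.
      rewrite !cc_in by lia.
      replace (n + 2 - S (n + 1))%nat with 0%nat by lia.
      replace (n + 1 - (n + 1))%nat with 0%nat by lia.
      replace (S (n + 1)) with (S (S n)) by lia. replace (n + 1)%nat with (S n) by lia.
      replace (n + 2)%nat with (S (S n)) by lia.
      rewrite (cf_S lam (S n)). pose proof (INR_S_pos (S n)).
      rewrite cf_0. inr. field. lra.
    + assert (j' <= n)%nat by lia. destruct (Nat.le_exists_sub j' n H) as [l [-> _]].
      rewrite !cc_in by lia.
      replace (l + j' + 2 - S j')%nat with (S l) by lia.
      replace (l + j' + 1 - S j')%nat with l by lia.
      replace (l + j' + 1 - j')%nat with (S l) by lia.
      replace (l + j' - j')%nat with l by lia.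
      rewrite !cf_S. pose proof (INR_S_pos j'). pose proof (INR_S_pos l).
      inr. field. split; lra.
Qed.

Lemma Sgr_comb N x a b b' d c0 c1 c2 th :
  (forall j, (j <= N)%nat -> c0 * a j = c1 * (b j + b' j) - c2 * d j) ->
  c0 * Sgr N x a th = c1 * (Sgr N x b th + Sgr N x b' th) - c2 * Sgr N x d th.
Proof.
  intros H. unfold Sgr. induction N as [|N IH].
  - cbn [sum_f_R0].
    transitivity ((c0 * a 0%nat) * cos ((x - 2 * INR 0) * th)); [ring|].
    rewrite H by lia. ring.
  - rewrite !tech5. rewrite Rmult_plus_distr_l, IH by (intros; apply H; lia).
    transitivity (c1 * (sum_f_R0 (fun j : nat => b j * cos ((x - 2 * INR j) * th)) N +
       sum_f_R0 (fun j : nat => b' j * cos ((x - 2 * INR j) * th)) N) -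
       c2 * sum_f_R0 (fun j : nat => d j * cos ((x - 2 * INR j) * th)) N +
       (c0 * a (S N)) * cos ((x - 2 * INR (S N)) * th)); [ring|].
    rewrite H by lia. ring.
Qed.

Lemma Sf_rec_aux lam p th :
  INR (S (S p)) * Sf lam (S (S p)) th =
  (INR (S (S p)) + lam - 1) * (2 * cos th * Sf lam (S p) th)
  - (INR (S (S p)) + 2 * lam - 2) * Sf lam p th.
Proof.
  set (X := INR p + 2).
  assert (E2 : Sf lam (S (S p)) th = Sgr (S (S p)) X (cc lam (S (S p))) th)
    by (unfold Sf; apply Sgr_x; unfold X; inr; ring).
  assert (E1 : 2 * cos th * Sf lam (S p) th =
     Sgr (S (S p)) X (cc lam (S p)) th + Sgr (S (S p)) X (shiftc (cc lam (S p))) th).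
  { unfold Sf. rewrite Sgr_cos. f_equal.
    - rewrite (Sgr_extend (S p)) by (apply cc_out; lia). apply Sgr_x. unfold X; inr; ring.
    - replace X with ((INR (S p) - 1) + 2) by (unfold X; inr; ring).
      rewrite Sgr_shift. reflexivity. }
  assert (E0 : Sf lam p th = Sgr (S (S p)) X (shiftc (cc lam p)) th).
  { unfold Sf. rewrite Sgr_extend by (simpl; apply cc_out; lia). unfold X.
    rewrite Sgr_shift. reflexivity. }
  rewrite E2, E1, E0. apply Sgr_comb. intros j Hj.
  pose proof (cc_rec lam p j). replace (p + 2)%nat with (S (S p)) in H by lia.
  replace (p + 1)%nat with (S p) in H by lia. apply H. lia.
Qed.

Lemma Sf_rec lam p th :
  Sf lam (S (S p)) th = (2 * (INR (S (S p)) + lam - 1) * cos th * Sf lam (S p) th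
     - (INR (S (S p)) + 2 * lam - 2) * Sf lam p th) / INR (S (S p)).
Proof.
  pose proof (Sf_rec_aux lam p th). pose proof (INR_S_pos (S p)).
  apply (Rmult_eq_reg_l (INR (S (S p)))); [|lra].
  rewrite H. field. lra.
Qed.

Lemma Sf_0 lam th : Sf lam 0 th = 1.
Proof. unfold Sf, Sgr, cc. simpl. rewrite cf_0. replace ((0 - 2 * 0) * th) with 0 by ring. rewrite cos_0; ring. Qed.

Lemma Sf_1 lam th : Sf lam 1 th = 2 * lam * cos th.
Proof.
  unfold Sf, Sgr, cc. simpl. replace (1 - 0)%nat with 1%nat by lia.
  rewrite cf_0. replace 1%nat with (S 0) by lia. rewrite cf_S, cf_0.
  simpl INR. replace ((1 - 2 * 0) * th) with th by ring.
  replace ((1 - 2 * 1) * th) with (- th) by ring. rewrite cos_neg. field.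
Qed.

Lemma gegen_Sf lam th n : gegen lam (cos th) n = Sf lam n th.
Proof.
  assert (H : forall n, gegen lam (cos th) n = Sf lam n th /\
                        gegen lam (cos th) (S n) = Sf lam (S n) th).
  { induction n0 as [|n0 [IH1 IH2]].
    - split; [rewrite Sf_0; reflexivity|]. rewrite Sf_1. simpl. ring.
    - split; [exact IH2|]. rewrite Sf_rec. cbn [gegen]. rewrite <- IH1, <- IH2.
      reflexivity. }
  apply H.
Qed.



Lemma poch_S x j : poch x (S j) = poch x j * (x + INR j).
Proof. reflexivity. Qed.

Lemma poch_pos x j : 0 < x -> 0 < poch x j.
Proof.
  intros Hx. induction j; simpl; [lra|].
  apply Rmult_lt_0_compat; auto. pose proof (pos_INR j). lra.
Qed.

Lemma cf_pos lam j : 0 < lam -> 0 < cf lam j.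
Proof. intros. unfold cf. apply Rdiv_lt_0_compat; [apply poch_pos; auto|apply INR_fact_pos]. Qed.

Lemma cc_nonneg lam n j : 0 < lam -> 0 <= cc lam n j.
Proof.
  intros. unfold cc. destruct (j <=? n)%nat; [|lra].
  apply Rlt_le, Rmult_lt_0_compat; apply cf_pos; auto.
Qed.

Lemma Sf_at0 lam n : Sf lam n 0 = sum_f_R0 (cc lam n) n.
Proof.
  unfold Sf, Sgr. apply sum_eq; intros. rewrite Rmult_0_r, cos_0. ring.
Qed.

Lemma Sf_bound lam n th : 0 < lam -> Rabs (Sf lam n th) <= Sf lam n 0.
Proof.
  intros Hl. rewrite Sf_at0. unfold Sf, Sgr.
  eapply Rle_trans; [apply sum_f_R0_triangle|].
  apply sum_Rle; intros j _. rewrite Rabs_mult.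
  rewrite (Rabs_right (cc lam n j)) by (apply Rle_ge, cc_nonneg; auto).
  pose proof (COS_bound ((INR n - 2 * INR j) * th)) as [_ H2].
  pose proof (Rabs_le_between (cos ((INR n - 2 * INR j) * th)) 1) as [_ H3].
  pose proof (cc_nonneg lam n j Hl).
  rewrite <- (Rmult_1_r (cc lam n j)) at 2. apply Rmult_le_compat_l; auto.
  apply Rabs_le. pose proof (COS_bound ((INR n - 2 * INR j) * th)). lra.
Qed.

Definition g1 (lam : R) (n : nat) : R := poch (2 * lam) n / INR (fact n).

Lemma gegen1 lam n : gegen lam 1 n = g1 lam n.
Proof.
  assert (H : forall n, gegen lam 1 n = g1 lam n /\ gegen lam 1 (S n) = g1 lam (S n)).
  { induction n0 as [|n0 [IH1 IH2]].
    - unfold g1; simpl; split; field.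
    - split; auto.
      change (gegen lam 1 (S (S n0))) with ((2 * (INR (S (S n0)) + lam - 1) * 1 * gegen lam 1 (S n0)
        - (INR (S (S n0)) + 2 * lam - 2) * gegen lam 1 n0) / INR (S (S n0))).
      rewrite IH1, IH2. unfold g1.
      rewrite !poch_S, !fact_simpl, !mult_INR. pose proof (INR_fact_pos n0).
      pose proof (pos_INR n0). inr. field. repeat split; lra. }
  apply H.
Qed.

Lemma Sf0_g1 lam n : Sf lam n 0 = g1 lam n.
Proof. rewrite <- gegen1, <- cos_0, gegen_Sf. reflexivity. Qed.

Lemma g1_pos lam n : 0 < lam -> 0 < g1 lam n.
Proof. intros. unfold g1. apply Rdiv_lt_0_compat; [apply poch_pos; lra|apply INR_fact_pos]. Qed.

Definition GN (lam : R) (n : nat) (th : R) : R := Sf lam n th / Sf lam n 0.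

Lemma GN_bound lam n th : 0 < lam -> Rabs (GN lam n th) <= 1.
Proof.
  intros. unfold GN. pose proof (g1_pos lam n H). rewrite <- Sf0_g1 in H0.
  rewrite Rabs_div by lra. rewrite (Rabs_right (Sf lam n 0)) by lra.
  apply (Rmult_le_reg_r (Sf lam n 0)); auto. field_simplify; try lra.
  apply Sf_bound; auto.
Qed.

Lemma GN_0 lam n : 0 < lam -> GN lam n 0 = 1.
Proof.
  intros. unfold GN. pose proof (g1_pos lam n H). rewrite <- Sf0_g1 in H0. field; lra.
Qed.

Lemma poch_raise lam j : poch (lam + 1) j * lam = poch lam j * (lam + INR j).
Proof.
  induction j; [simpl; ring|]. rewrite !poch_S.
  transitivity (poch (lam + 1) j * lam * (lam + 1 + INR j)); [ring|].
  rewrite IHj, S_INR. ring.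
Qed.

Lemma cf_raise lam j : lam <> 0 -> cf (lam + 1) j = cf lam j * (lam + INR j) / lam.
Proof.
  intros H. unfold cf. pose proof (INR_fact_pos j).
  replace (poch (lam + 1) j) with (poch lam j * (lam + INR j) / lam)
    by (rewrite <- poch_raise; field; auto).
  field. split; lra.
Qed.

Lemma cc_raise lam p j : 0 < lam -> (j <= p + 2)%nat ->
  (INR (p + 2) + lam) / lam * cc lam (p + 2) j =
  1 * (cc (lam + 1) (p + 2) j + 0) - 1 * shiftc (cc (lam + 1) p) j.
Proof.
  intros Hl Hj. destruct j as [|j'].
  - simpl shiftc. rewrite !cc_in by lia. rewrite !Nat.sub_0_r.
    rewrite !cf_raise by lra. rewrite cf_0. inr. field. lra.
  - simpl shiftc. destruct (Nat.eq_dec j' (p + 1)) as [->|Hne].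
    + rewrite (cc_out _ p) by lia. rewrite !cc_in by lia.
      replace (p + 2 - S (p + 1))%nat with 0%nat by lia.
      rewrite !cf_raise by lra. rewrite cf_0. inr. field. lra.
    + assert (j' <= p)%nat by lia. destruct (Nat.le_exists_sub j' p H) as [l [-> _]].
      rewrite !cc_in by lia.
      replace (l + j' + 2 - S j')%nat with (S l) by lia.
      replace (l + j' - j')%nat with l by lia.
      rewrite !cf_raise by lra. rewrite !cf_S. pose proof (INR_S_pos j'). pose proof (INR_S_pos l).
      inr. field. repeat split; lra.
Qed.

Lemma Sgr_zero N x th : Sgr N x (fun _ => 0) th = 0.
Proof. unfold Sgr. induction N; simpl; [ring|]. rewrite IHN; ring. Qed.

Lemma Sf_raise lam p th : 0 < lam ->
  (INR (S (S p)) + lam) / lam * Sf lam (S (S p)) th =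
  Sf (lam + 1) (S (S p)) th - Sf (lam + 1) p th.
Proof.
  intros Hl. set (X := INR p + 2).
  assert (E2 : forall l, Sf l (S (S p)) th = Sgr (S (S p)) X (cc l (S (S p))) th)
    by (intros; unfold Sf; apply Sgr_x; unfold X; inr; ring).
  assert (E0 : Sf (lam + 1) p th = Sgr (S (S p)) X (shiftc (cc (lam + 1) p)) th).
  { unfold Sf. rewrite Sgr_extend by (simpl; apply cc_out; lia). unfold X.
    rewrite Sgr_shift. reflexivity. }
  rewrite !E2, E0.
  transitivity (1 * (Sgr (S (S p)) X (cc (lam + 1) (S (S p))) th + Sgr (S (S p)) X (fun _ => 0) th)
    - 1 * Sgr (S (S p)) X (shiftc (cc (lam + 1) p)) th).
  - apply Sgr_comb. intros j Hj.
    pose proof (cc_raise lam p j Hl). replace (p + 2)%nat with (S (S p)) in H by lia.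
    apply H. lia.
  - rewrite Sgr_zero. ring.
Qed.

Definition alpha (lam : R) (n : nat) : R :=
  lam * Sf (lam + 1) n 0 / ((INR n + lam) * Sf lam n 0).

Lemma GN_raise lam n th : 0 < lam ->
  GN lam n th = alpha lam n * GN (lam + 1) n th + (1 - alpha lam n) * GN (lam + 1) (n - 2) th.
Proof.
  intros Hl.
  assert (G0 : forall m, 0 < Sf lam m 0) by (intro m; rewrite Sf0_g1; apply g1_pos; lra).
  assert (G1 : forall m, 0 < Sf (lam + 1) m 0) by (intro m; rewrite Sf0_g1; apply g1_pos; lra).
  unfold GN, alpha. destruct n as [|[|p]].
  - rewrite !Sf_0. simpl INR. field. lra.
  - rewrite !Sf_1. simpl Nat.sub. rewrite !Sf_0. rewrite cos_0. simpl INR. field. lra.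
  - replace (S (S p) - 2)%nat with p by lia.
    pose proof (Sf_raise lam p th Hl). pose proof (Sf_raise lam p 0 Hl).
    pose proof (G0 (S (S p))). pose proof (G1 (S (S p))). pose proof (G1 p).
    pose proof (pos_INR (S (S p))).
    assert (Sf lam (S (S p)) th = lam / (INR (S (S p)) + lam) *
              (Sf (lam + 1) (S (S p)) th - Sf (lam + 1) p th)).
    { rewrite <- H. field. lra. }
    assert (Sf lam (S (S p)) 0 = lam / (INR (S (S p)) + lam) *
              (Sf (lam + 1) (S (S p)) 0 - Sf (lam + 1) p 0)).
    { rewrite <- H0. field. lra. }
    assert (Sf (lam + 1) (S (S p)) 0 - Sf (lam + 1) p 0 <> 0).
    { intro Hc. rewrite Hc in H6. lra. }
    rewrite H5, H6. field. repeat split; try lra.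
Qed.



Lemma C_S1 a b : (b <= a)%nat -> C (S a) b * INR (S a - b) = C a b * INR (S a).
Proof.
  intros H. unfold C. replace (S a - b)%nat with (S (a - b)) by lia.
  rewrite !fact_simpl, !mult_INR.
  pose proof (INR_fact_pos b). pose proof (INR_fact_pos (a - b)). pose proof (INR_S_pos (a - b)).
  pose proof (INR_fact_pos a). pose proof (INR_S_pos a).
  field. lra.
Qed.

Lemma C_S2 a b : (b <= a)%nat -> C (S a) (S b) * INR (S b) = C a b * INR (S a).
Proof.
  intros H. unfold C. replace (S a - S b)%nat with (a - b)%nat by lia.
  rewrite !fact_simpl, !mult_INR.
  pose proof (INR_fact_pos b). pose proof (INR_fact_pos (a - b)). pose proof (INR_S_pos b).
  pose proof (INR_fact_pos a). pose proof (INR_S_pos a).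
  field. lra.
Qed.

Lemma C_pos a b : (b <= a)%nat -> 0 < C a b.
Proof.
  intros. unfold C. apply Rdiv_lt_0_compat; [apply INR_fact_pos|].
  apply Rmult_lt_0_compat; apply INR_fact_pos.
Qed.

Lemma poch_Sl x m : poch x (S m) = x * poch (x + 1) m.
Proof.
  induction m; [simpl; ring|].
  rewrite poch_S, IHm, poch_S, S_INR. ring.
Qed.

Lemma dfact_S k : INR (dfact_odd (S k)) = (2 * INR k + 1) * INR (dfact_odd k).
Proof.
  change (dfact_odd (S k)) with ((2 * S k - 1) * dfact_odd k)%nat.
  rewrite mult_INR. f_equal. replace (2 * S k - 1)%nat with (S (2 * k)) by lia.
  inr. ring.
Qed.

Lemma dfact_pos k : 0 < INR (dfact_odd k).
Proof.
  induction k; [simpl; lra|]. rewrite dfact_S. pose proof (pos_INR k).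
  apply Rmult_lt_0_compat; lra.
Qed.

Definition alk (k n : nat) : R :=
  (2 * INR k + 1 + INR n) * (2 * INR k + 2 + INR n) /
  ((2 * INR n + 2 * INR k + 1) * (2 * INR k + 2)).

Lemma alpha_explicit k n : alpha (INR k + 1/2) n = alk k n.
Proof.
  unfold alpha, alk. rewrite !Sf0_g1. unfold g1.
  set (x := 2 * (INR k + 1 / 2)).
  replace (2 * (INR k + 1 / 2 + 1)) with (x + 1 + 1) by (unfold x; ring).
  assert (H1 : poch (x + 1) n * x = poch x n * (x + INR n)) by apply poch_raise.
  assert (H2 : poch (x + 1 + 1) n * (x + 1) = poch (x + 1) n * (x + 1 + INR n)) by apply poch_raise.
  assert (Hx : 0 < x) by (unfold x; pose proof (pos_INR k); lra).
  assert (Hp : 0 < poch x n) by (apply poch_pos; lra).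
  pose proof (INR_fact_pos n). pose proof (pos_INR n).
  replace (poch (x + 1 + 1) n) with (poch x n * (x + INR n) * (x + 1 + INR n) / (x * (x + 1))).
  2:{ assert (H3 : poch (x + 1 + 1) n * (x * (x + 1)) = poch x n * (x + INR n) * (x + 1 + INR n)).
      { transitivity (poch (x + 1 + 1) n * (x + 1) * x); [ring|]. rewrite H2.
        transitivity (poch (x + 1) n * x * (x + 1 + INR n)); [ring|]. rewrite H1. ring. }
      rewrite <- H3. field. split; lra. }
  pose proof (pos_INR k). unfold x in *. field. repeat split; lra.
Qed.



Lemma u_rec_b k n i' : (i' < k)%nat ->
  u_coef (S i') n (S k) = u_coef (S i') n k * alk k n + u_coef i' (n + 2) k * (1 - alk k (n + 2)).
Proof.
  intros Hik. unfold u_coef.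
  change ((-1) ^ (S i')) with (-1 * (-1) ^ i').
  change (2 ^ (S k)) with (2 * 2 ^ k).
  rewrite dfact_S.
  set (Cb := C (S k) (S i')).
  assert (E1 : C k (S i') = Cb * INR (k - i') / INR (S k)).
  { pose proof (C_S1 k (S i') ltac:(lia)). replace (S k - S i')%nat with (k - i')%nat in H by lia.
    unfold Cb. rewrite H. pose proof (INR_S_pos k). field. lra. }
  assert (E2 : C k i' = Cb * INR (S i') / INR (S k)).
  { pose proof (C_S2 k i' ltac:(lia)). unfold Cb. rewrite H. pose proof (INR_S_pos k). field. lra. }
  rewrite E1, E2.
  set (m := (2 * k + n)%nat).
  replace (2 * S k + n)%nat with (S (S m)) by (unfold m; lia).
  replace (2 * k + (n + 2))%nat with (S (S m)) by (unfold m; lia).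
  replace (n + 2)%nat with (S (S n)) by lia.
  set (Cm := C m n).
  assert (F1 : C (S m) n = Cm * INR (S m) / INR (S m - n)).
  { pose proof (C_S1 m n ltac:(unfold m; lia)). unfold Cm. rewrite <- H.
    assert (0 < INR (S m - n)) by (apply lt_0_INR; unfold m; lia). field. lra. }
  assert (F2 : C (S (S m)) n = C (S m) n * INR (S (S m)) / INR (S (S m) - n)).
  { pose proof (C_S1 (S m) n ltac:(unfold m; lia)). rewrite <- H.
    assert (0 < INR (S (S m) - n)) by (apply lt_0_INR; unfold m; lia). field. lra. }
  assert (F3 : C (S m) (S n) = Cm * INR (S m) / INR (S n)).
  { pose proof (C_S2 m n ltac:(unfold m; lia)). unfold Cm. rewrite <- H.
    pose proof (INR_S_pos n). field. lra. }
  assert (F4 : C (S (S m)) (S (S n)) = C (S m) (S n) * INR (S (S m)) / INR (S (S n))).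
  { pose proof (C_S2 (S m) (S n) ltac:(unfold m; lia)). rewrite <- H.
    pose proof (INR_S_pos (S n)). field. lra. }
  rewrite F4, F3, F2, F1.
  replace (S (S m) - n)%nat with (S (S (2 * k))) by (unfold m; lia).
  replace (S m - n)%nat with (S (2 * k)) by (unfold m; lia).
  destruct (Nat.le_exists_sub (S i') k ltac:(lia)) as [r [Hr _]].
  replace (S k - S i')%nat with (S r) by lia.
  replace (k - i')%nat with (S r) by lia.
  replace (k - S i')%nat with r by lia.
  set (x := INR n + INR (S i') + 1 / 2).
  replace (INR (S (S n)) + INR i' + 1 / 2) with (x + 1) by (unfold x; inr; ring).
  set (y := INR n + INR k + 3 / 2).
  replace (INR (S (S n)) + INR k + 3 / 2) with (y + 1 + 1) by (unfold y; inr; ring).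
  replace (INR n + INR (S k) + 3 / 2) with (y + 1) by (unfold y; inr; ring).
  assert (Hx : 0 < x) by (unfold x; pose proof (pos_INR n); pose proof (pos_INR (S i')); lra).
  assert (Hy : 0 < y) by (unfold y; pose proof (pos_INR n); pose proof (pos_INR k); lra).
  assert (P1 : poch (x + 1) (S r) = poch x (S r) * (x + INR (S r)) / x).
  { pose proof (poch_raise x (S r)). rewrite <- H. field. lra. }
  assert (P2 : poch y (S i') = poch (y + 1) (S i') * y / (y + INR (S i'))).
  { pose proof (poch_raise y (S i')). rewrite H. pose proof (pos_INR (S i')). field. lra. }
  rewrite P1, P2, (poch_Sl (y + 1) i'), poch_S.
  pose proof (poch_pos x r Hx). pose proof (poch_pos (y + 1 + 1) i' ltac:(lra)).
  pose proof (C_pos (S k) (S i') ltac:(lia)). fold Cb in H1.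
  pose proof (C_pos m n ltac:(unfold m; lia)). fold Cm in H2.
  pose proof (dfact_pos k).
  assert (Hk : k = (r + S i')%nat) by lia.
  unfold alk. unfold x, y, m in *. rewrite Hk. inr.
  pose proof (pos_INR r). pose proof (pos_INR i'). pose proof (pos_INR n).
  field. repeat split; try lra; [apply pow_nonzero; lra|apply Rgt_not_eq, poch_pos; lra].
Qed.

Lemma poch_0 x : poch x 0 = 1.
Proof. reflexivity. Qed.

Lemma C_n0 a : C a 0 = 1.
Proof. unfold C. rewrite Nat.sub_0_r. simpl fact. pose proof (INR_fact_pos a). simpl INR. field. lra. Qed.

Lemma C_nn a : C a a = 1.
Proof. unfold C. rewrite Nat.sub_diag. simpl fact. pose proof (INR_fact_pos a). simpl INR. field. lra. Qed.

Lemma u_rec_a k n : u_coef 0 n (S k) = u_coef 0 n k * alk k n.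
Proof.
  unfold u_coef. rewrite !C_n0. rewrite !Nat.sub_0_r.
  change (2 ^ (S k)) with (2 * 2 ^ k). rewrite dfact_S.
  set (m := (2 * k + n)%nat).
  replace (2 * S k + n)%nat with (S (S m)) by (unfold m; lia).
  set (Cm := C m n).
  assert (F1 : C (S m) n = Cm * INR (S m) / INR (S m - n)).
  { pose proof (C_S1 m n ltac:(unfold m; lia)). unfold Cm. rewrite <- H.
    assert (0 < INR (S m - n)) by (apply lt_0_INR; unfold m; lia). field. lra. }
  assert (F2 : C (S (S m)) n = C (S m) n * INR (S (S m)) / INR (S (S m) - n)).
  { pose proof (C_S1 (S m) n ltac:(unfold m; lia)). rewrite <- H.
    assert (0 < INR (S (S m) - n)) by (apply lt_0_INR; unfold m; lia). field. lra. }
  rewrite F2, F1.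
  replace (S (S m) - n)%nat with (S (S (2 * k))) by (unfold m; lia).
  replace (S m - n)%nat with (S (2 * k)) by (unfold m; lia).
  rewrite poch_S. simpl poch.
  set (x := INR n + INR 0 + 1 / 2).
  assert (Hx : 0 < x) by (unfold x; pose proof (pos_INR n); simpl INR; lra).
  pose proof (poch_pos x k Hx).
  pose proof (C_pos m n ltac:(unfold m; lia)). fold Cm in H0.
  pose proof (dfact_pos k).
  unfold alk. unfold x, m in *. inr.
  pose proof (pos_INR k). pose proof (pos_INR n).
  field. repeat split; try lra. apply pow_nonzero; lra.
Qed.

Lemma u_rec_c k n : u_coef (S k) n (S k) = u_coef k (n + 2) k * (1 - alk k (n + 2)).
Proof.
  unfold u_coef. rewrite !C_nn, !Nat.sub_diag.
  change ((-1) ^ (S k)) with (-1 * (-1) ^ k).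
  change (2 ^ (S k)) with (2 * 2 ^ k). rewrite dfact_S.
  set (m := (2 * k + n)%nat).
  replace (2 * S k + n)%nat with (S (S m)) by (unfold m; lia).
  replace (2 * k + (n + 2))%nat with (S (S m)) by (unfold m; lia).
  replace (n + 2)%nat with (S (S n)) by lia.
  set (Cm := C m n).
  assert (F1 : C (S m) n = Cm * INR (S m) / INR (S m - n)).
  { pose proof (C_S1 m n ltac:(unfold m; lia)). unfold Cm. rewrite <- H.
    assert (0 < INR (S m - n)) by (apply lt_0_INR; unfold m; lia). field. lra. }
  assert (F2 : C (S (S m)) n = C (S m) n * INR (S (S m)) / INR (S (S m) - n)).
  { pose proof (C_S1 (S m) n ltac:(unfold m; lia)). rewrite <- H.
    assert (0 < INR (S (S m) - n)) by (apply lt_0_INR; unfold m; lia). field. lra. }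
  assert (F3 : C (S m) (S n) = Cm * INR (S m) / INR (S n)).
  { pose proof (C_S2 m n ltac:(unfold m; lia)). unfold Cm. rewrite <- H.
    pose proof (INR_S_pos n). field. lra. }
  assert (F4 : C (S (S m)) (S (S n)) = C (S m) (S n) * INR (S (S m)) / INR (S (S n))).
  { pose proof (C_S2 (S m) (S n) ltac:(unfold m; lia)). rewrite <- H.
    pose proof (INR_S_pos (S n)). field. lra. }
  rewrite F4, F3, F2, F1.
  replace (S (S m) - n)%nat with (S (S (2 * k))) by (unfold m; lia).
  replace (S m - n)%nat with (S (2 * k)) by (unfold m; lia).
  rewrite !poch_0.
  set (y := INR n + INR k + 3 / 2).
  replace (INR (S (S n)) + INR k + 3 / 2) with (y + 1 + 1) by (unfold y; inr; ring).
  replace (INR n + INR (S k) + 3 / 2) with (y + 1) by (unfold y; inr; ring).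
  rewrite (poch_Sl (y + 1) k).
  assert (Hy : 0 < y) by (unfold y; pose proof (pos_INR n); pose proof (pos_INR k); lra).
  pose proof (poch_pos (y + 1 + 1) k ltac:(lra)).
  pose proof (C_pos m n ltac:(unfold m; lia)). fold Cm in H0.
  pose proof (dfact_pos k).
  unfold alk. unfold y, m in *. inr.
  pose proof (pos_INR k). pose proof (pos_INR n).
  field. repeat split; try lra. apply pow_nonzero; lra.
Qed.



Definition lamk (k : nat) : R := INR k + 1 / 2.

Definition Wc (k m i : nat) : R :=
  if andb (i <=? k)%nat (2 * i <=? m)%nat then u_coef i (m - 2 * i) k else 0.

Lemma alk_0 k : alk k 0 = 1.
Proof. unfold alk. simpl INR. pose proof (pos_INR k). field. lra. Qed.

Lemma alk_1 k : alk k 1 = 1.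
Proof. unfold alk. simpl INR. pose proof (pos_INR k). field. lra. Qed.

Lemma Wc_rec k m i : (i <= S k)%nat ->
  Wc (S k) m i = (if (i <=? k)%nat then Wc k m i * alk k (m - 2 * i) else 0)
     + shiftc (fun i => Wc k m i * (1 - alk k (m - 2 * i))) i.
Proof.
  intros Hi. unfold Wc. destruct i as [|i'].
  - cbn [shiftc]. rewrite !Nat.mul_0_r, !Nat.sub_0_r. cbn [Nat.leb andb]. rewrite u_rec_a. ring.
  - cbn [shiftc].
    destruct (Nat.leb_spec (2 * S i') m) as [Hm|Hm].
    + destruct (Nat.leb_spec (S i') k) as [Hk|Hk].
      * assert (Hb : (i' <=? k)%nat = true) by (apply Nat.leb_le; lia).
        assert (Hb2 : (2 * i' <=? m)%nat = true) by (apply Nat.leb_le; lia).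
        assert (Hb3 : (S i' <=? S k)%nat = true) by (apply Nat.leb_le; lia).
        rewrite Hb, Hb2, Hb3. simpl andb.
        replace (m - 2 * i')%nat with ((m - 2 * S i') + 2)%nat by lia.
        apply u_rec_b. lia.
      * assert (i' = k) by lia. subst i'.
        rewrite Nat.leb_refl, (proj2 (Nat.leb_le (2 * k) m)) by lia. simpl andb.
        replace (m - 2 * k)%nat with ((m - 2 * S k) + 2)%nat by lia.
        rewrite u_rec_c, Nat.leb_refl. cbn [andb]. ring.
    + rewrite !Bool.andb_false_r.
      assert (Z : forall (b : bool) (x:R), (if b then 0 * x else 0) = 0) by (intros [|]; intros; ring).
      rewrite Z.
      destruct (i' <=? k)%nat; cbn [andb]; [|ring].
      destruct (Nat.leb_spec (2 * i') m); [|ring].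
      assert (m - 2 * i' = 0 \/ m - 2 * i' = 1)%nat as [E|E] by lia; rewrite E;
        [rewrite alk_0|rewrite alk_1]; ring.
Qed.

Lemma conn_step k m th :
  sum_f_R0 (fun i => Wc k m i * GN (lamk k) (m - 2 * i) th) k =
  sum_f_R0 (fun i => Wc (S k) m i * GN (lamk (S k)) (m - 2 * i) th) (S k).
Proof.
  assert (HL : lamk (S k) = lamk k + 1) by (unfold lamk; rewrite S_INR; ring).
  assert (Hpos : 0 < lamk k) by (unfold lamk; pose proof (pos_INR k); lra).
  rewrite HL.
  transitivity (sum_f_R0 (fun i => Wc k m i * (alk k (m - 2 * i) * GN (lamk k + 1) (m - 2 * i) th
      + (1 - alk k (m - 2 * i)) * GN (lamk k + 1) (m - 2 * S i) th)) k).
  { apply sum_eq. intros i _. rewrite GN_raise by auto.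
    assert (A : forall j, alpha (lamk k) j = alk k j) by (intro; apply alpha_explicit).
    rewrite !A.
    replace (m - 2 * i - 2)%nat with (m - 2 * S i)%nat by lia. reflexivity. }
  transitivity (sum_f_R0 (fun i => (if (i <=? k)%nat then Wc k m i * alk k (m - 2 * i) else 0)
        * GN (lamk k + 1) (m - 2 * i) th) (S k)
     + sum_f_R0 (fun i => shiftc (fun i => Wc k m i * (1 - alk k (m - 2 * i))) i
        * GN (lamk k + 1) (m - 2 * i) th) (S k)).
  { transitivity (sum_f_R0 (fun i => Wc k m i * alk k (m - 2 * i) * GN (lamk k + 1) (m - 2 * i) th) k
      + sum_f_R0 (fun i => Wc k m i * (1 - alk k (m - 2 * i)) * GN (lamk k + 1) (m - 2 * S i) th) k).
    { rewrite <- plus_sum. apply sum_eq; intros; ring. }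
    rewrite tech5. rewrite (proj2 (Nat.leb_gt (S k) k)) by lia.
    rewrite (decomp_sum _ (S k)) by lia. cbn [pred shiftc].
    rewrite Rmult_0_l, Rmult_0_l, Rplus_0_l, Rplus_0_r.
    f_equal. apply sum_eq. intros i Hi. rewrite (proj2 (Nat.leb_le i k)) by lia. ring. }
  rewrite <- plus_sum. apply sum_eq. intros i Hi. rewrite Wc_rec by lia. ring.
Qed.

Lemma u_coef_00 m : u_coef 0 m 0 = 1.
Proof.
  unfold u_coef. simpl Nat.mul. rewrite Nat.add_0_l, !C_nn. simpl. field.
Qed.

Lemma connection k m th :
  GN (1 / 2) m th = sum_f_R0 (fun i => Wc k m i * GN (lamk k) (m - 2 * i) th) k.
Proof.
  induction k as [|k IH].
  - simpl. unfold Wc. simpl. rewrite Nat.sub_0_r, u_coef_00. unfold lamk. simpl INR.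
    rewrite Rplus_0_l. ring.
  - rewrite IH. apply conn_step.
Qed.



Lemma is_derive_mult' (f g : R -> R) x df dg : is_derive f x df -> is_derive g x dg ->
  is_derive (fun t => f t * g t) x (df * g x + f x * dg).
Proof. intros H1 H2. apply (is_derive_mult f g x df dg H1 H2). intros; apply Rmult_comm. Qed.

Lemma is_derive_powsin N x : is_derive (fun t => sin t ^ (S N)) x ((INR N + 1) * sin x ^ N * cos x).
Proof. auto_derive; auto. destruct N; [simpl|]; ring. Qed.

Lemma cont_mult' (f g : R -> R) x : continuous f x -> continuous g x -> continuous (fun t => f t * g t) x.
Proof. intros; apply (continuous_mult f g); auto. Qed.

Lemma is_derive_sum (f df : nat -> R -> R) N x :
  (forall j, is_derive (f j) x (df j x)) ->
  is_derive (fun t => sum_f_R0 (fun j => f j t) N) x (sum_f_R0 (fun j => df j x) N).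
Proof.
  intros H. induction N as [|N IH]; simpl; [apply H|].
  apply (is_derive_plus (fun t => sum_f_R0 (fun j => f j t) N) (f (S N))); auto.
Qed.

Definition pj (n j : nat) : R := INR n - 2 * INR j.

Definition Sd1 (lam : R) (n : nat) (th : R) : R :=
  sum_f_R0 (fun j => - (cc lam n j * pj n j) * sin (pj n j * th)) n.
Definition Sd2 (lam : R) (n : nat) (th : R) : R :=
  sum_f_R0 (fun j => - (cc lam n j * pj n j * pj n j) * cos (pj n j * th)) n.

Lemma Sf_derive lam n x : is_derive (Sf lam n) x (Sd1 lam n x).
Proof.
  unfold Sf, Sgr, Sd1.
  apply (is_derive_sum (fun j t => cc lam n j * cos ((INR n - 2 * INR j) * t))
                       (fun j t => - (cc lam n j * pj n j) * sin (pj n j * t))).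
  intros j. unfold pj. auto_derive; auto. ring.
Qed.

Lemma Sd1_derive lam n x : is_derive (Sd1 lam n) x (Sd2 lam n x).
Proof.
  unfold Sd1, Sd2.
  apply (is_derive_sum (fun j t => - (cc lam n j * pj n j) * sin (pj n j * t))
                       (fun j t => - (cc lam n j * pj n j * pj n j) * cos (pj n j * t))).
  intros j. auto_derive; auto. ring.
Qed.

Lemma Sf_cont lam n x : continuous (Sf lam n) x.
Proof. apply (@ex_derive_continuous R_AbsRing R_NormedModule). exists (Sd1 lam n x). apply Sf_derive. Qed.

Lemma Sd1_cont lam n x : continuous (Sd1 lam n) x.
Proof. apply (@ex_derive_continuous R_AbsRing R_NormedModule). exists (Sd2 lam n x). apply Sd1_derive. Qed.

Lemma telesc (f g : nat -> R) N : f 0%nat = 0 -> g N = 0 ->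
  (forall j, (j < N)%nat -> g j = f (S j)) -> sum_f_R0 (fun j => f j - g j) N = 0.
Proof.
  intros H0 HN H. assert (forall M, (M <= N)%nat -> sum_f_R0 (fun j => f j - g j) M = f 0%nat - g M).
  { induction M; intros; simpl; [ring|]. rewrite IHM by lia. rewrite H by lia. ring. }
  rewrite H1 by lia. rewrite H0, HN. ring.
Qed.

Lemma sum_lin3 (a b c : R) f g h N :
  a * sum_f_R0 f N + b * sum_f_R0 g N + c * sum_f_R0 h N =
  sum_f_R0 (fun j => a * f j + b * g j + c * h j) N.
Proof. induction N; simpl; [ring|]. rewrite <- IHN. ring. Qed.

Lemma Sf_ode lam n th :
  sin th * Sd2 lam n th + 2 * lam * cos th * Sd1 lam n th
  + INR n * (INR n + 2 * lam) * sin th * Sf lam n th = 0.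
Proof.
  set (mu := INR n * (INR n + 2 * lam)).
  unfold Sd2, Sd1, Sf, Sgr. rewrite sum_lin3.
  set (T := fun j => cc lam n j * (mu - pj n j * pj n j - 2 * lam * pj n j) * sin ((pj n j + 1) * th) / 2).
  set (T' := fun j => cc lam n j * (mu - pj n j * pj n j + 2 * lam * pj n j) * sin ((pj n j - 1) * th) / 2).
  transitivity (sum_f_R0 (fun j => T j - T' j) n).
  { apply sum_eq. intros j _. unfold T, T'.
    replace ((pj n j + 1) * th) with (pj n j * th + th) by ring.
    replace ((pj n j - 1) * th) with (pj n j * th - th) by ring.
    rewrite sin_plus, sin_minus. fold (pj n j). field. }
  apply telesc.
  - unfold T, pj, mu. cbv beta. simpl INR. field.
  - unfold T', pj, mu. cbv beta. field.
  - intros j Hj. unfold T, T'.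
    replace ((pj n (S j) + 1) * th) with ((pj n j - 1) * th) by (unfold pj; rewrite S_INR; ring).
    f_equal. f_equal.
    destruct (Nat.le_exists_sub (S j) n ltac:(lia)) as [l [Hl _]].
    rewrite !cc_in by lia.
    replace (n - j)%nat with (S l) by lia. replace (n - S j)%nat with l by lia.
    rewrite !cf_S. subst n. unfold pj, mu. pose proof (INR_S_pos j). pose proof (INR_S_pos l).
    inr. field. split; lra.
Qed.



Lemma cont_eps (f : R -> R) x : continuous f x -> forall eps, 0 < eps ->
  exists d, 0 < d /\ forall y, Rabs (y - x) < d -> Rabs (f y - f x) < eps.
Proof.
  intros Hc eps He. pose proof (proj1 (filterlim_locally f (f x)) Hc (mkposreal eps He)) as H.
  destruct H as [d Hd]. exists d. split; [apply cond_pos|].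
  intros y Hy. apply (Hd y). exact Hy.
Qed.

Lemma sinpow_derive N x : is_derive (fun t => sin t ^ N) x (INR N * sin x ^ (pred N) * cos x).
Proof. auto_derive; auto. ring. Qed.

Lemma sinpow_cont N x : continuous (fun t => sin t ^ N) x.
Proof. apply (@ex_derive_continuous R_AbsRing R_NormedModule). eexists. apply sinpow_derive. Qed.

Lemma minusR (a b : R) : minus a b = a - b.
Proof. reflexivity. Qed.

Lemma is_RInt_unscale (f : R -> R) a b c l : c <> 0 ->
  is_RInt (fun t => c * f t) a b l -> is_RInt f a b (l / c).
Proof.
  intros Hc H. apply (is_RInt_scal _ a b (/ c) l) in H.
  assert (E : scal (/ c) l = l / c) by (unfold scal; simpl; unfold mult; simpl; unfold Rdiv; ring).
  rewrite E in H. eapply is_RInt_ext; [|exact H].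
  intros x _. unfold scal; simpl; unfold mult; simpl. field. auto.
Qed.

Section Orth.
Variable k : nat.
Let lam := INR k + 1 / 2.
Let s := fun t => sin t ^ (S (2 * k)).

Lemma orth_deriv n m x :
  is_derive (fun t => s t * (Sf lam n t * Sd1 lam m t - Sf lam m t * Sd1 lam n t)) x
    ((INR n * (INR n + 2 * lam) - INR m * (INR m + 2 * lam)) * (s x * (Sf lam n x * Sf lam m x))).
Proof.
  unfold s.
  evar (D : R).
  assert (HD : is_derive (fun t => sin t ^ (S (2 * k)) *
        (Sf lam n t * Sd1 lam m t - Sf lam m t * Sd1 lam n t)) x D).
  { apply (is_derive_mult' (fun t => sin t ^ (S (2 * k)))
       (fun t => Sf lam n t * Sd1 lam m t - Sf lam m t * Sd1 lam n t)). apply sinpow_derive.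
    apply (is_derive_minus (fun t => Sf lam n t * Sd1 lam m t) (fun t => Sf lam m t * Sd1 lam n t)).
    - apply (is_derive_mult' (Sf lam n) (Sd1 lam m)); [apply Sf_derive|apply Sd1_derive].
    - apply (is_derive_mult' (Sf lam m) (Sd1 lam n)); [apply Sf_derive|apply Sd1_derive]. }
  unfold D in HD. eapply is_derive_ext; [intro; reflexivity|].
  replace ((INR n * (INR n + 2 * lam) - INR m * (INR m + 2 * lam)) *
     (sin x ^ S (2 * k) * (Sf lam n x * Sf lam m x))) with
    (INR (S (2 * k)) * sin x ^ pred (S (2 * k)) * cos x *
       (Sf lam n x * Sd1 lam m x - Sf lam m x * Sd1 lam n x) +
       sin x ^ S (2 * k) *
       minus (Sd1 lam n x * Sd1 lam m x + Sf lam n x * Sd2 lam m x)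
         (Sd1 lam m x * Sd1 lam n x + Sf lam m x * Sd2 lam n x)); [exact HD|].
  pose proof (Sf_ode lam n x) as On. pose proof (Sf_ode lam m x) as Om.
  change (pred (S (2 * k))) with (2 * k)%nat. change (sin x ^ S (2 * k)) with (sin x * sin x ^ (2 * k)).
  rewrite (minusR (Sd1 lam n x * Sd1 lam m x + Sf lam n x * Sd2 lam m x)).
  assert (E1 : sin x * Sd2 lam n x = - (2 * lam * cos x * Sd1 lam n x + INR n * (INR n + 2 * lam) * sin x * Sf lam n x)) by lra.
  assert (E2 : sin x * Sd2 lam m x = - (2 * lam * cos x * Sd1 lam m x + INR m * (INR m + 2 * lam) * sin x * Sf lam m x)) by lra.
  transitivity (INR (S (2 * k)) * sin x ^ (2 * k) * cos x *
      (Sf lam n x * Sd1 lam m x - Sf lam m x * Sd1 lam n x) +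
      sin x ^ (2 * k) * (Sf lam n x * (sin x * Sd2 lam m x) - Sf lam m x * (sin x * Sd2 lam n x)));
   [ring|].
  rewrite E1, E2. unfold lam. inr. field.
Qed.

Lemma orth_cont n m c x : continuous (fun t => c * (s t * (Sf lam n t * Sf lam m t))) x.
Proof.
  apply cont_mult'; [apply continuous_const|]. apply cont_mult'; [apply sinpow_cont|].
  apply cont_mult'; apply Sf_cont.
Qed.

Lemma orth_Sf n m : n <> m ->
  is_RInt (fun t => s t * (Sf lam n t * Sf lam m t)) 0 PI 0.
Proof.
  intros Hnm.
  pose (c := INR n * (INR n + 2 * lam) - INR m * (INR m + 2 * lam)).
  assert (Hc : c <> 0).
  { assert (Ec : c = (INR n - INR m) * (INR n + INR m + 2 * lam)) by (unfold c; ring).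
    rewrite Ec. pose proof (pos_INR n). pose proof (pos_INR m).
    assert (0 < lam) by (unfold lam; pose proof (pos_INR k); lra).
    apply Rmult_integral_contrapositive_currified; [|lra].
    intro E. apply Hnm, INR_eq. lra. }
  assert (HI : is_RInt (fun t => c * (s t * (Sf lam n t * Sf lam m t))) 0 PI
      (minus ((fun t => s t * (Sf lam n t * Sd1 lam m t - Sf lam m t * Sd1 lam n t)) PI)
             ((fun t => s t * (Sf lam n t * Sd1 lam m t - Sf lam m t * Sd1 lam n t)) 0))).
  { apply (@is_RInt_derive R_CompleteNormedModule
      (fun t => s t * (Sf lam n t * Sd1 lam m t - Sf lam m t * Sd1 lam n t))
      (fun t => c * (s t * (Sf lam n t * Sf lam m t)))).
    - intros x _. apply orth_deriv.
    - intros x _. apply orth_cont. }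
  assert (Z : forall t, sin t = 0 ->
     s t * (Sf lam n t * Sd1 lam m t - Sf lam m t * Sd1 lam n t) = 0).
  { intros t Ht. unfold s. change (sin t ^ S (2 * k)) with (sin t * sin t ^ (2 * k)).
    rewrite Ht. ring. }
  cbv beta in HI. rewrite (Z PI sin_PI), (Z 0 sin_0) in HI.
  apply is_RInt_unscale in HI; auto.
  replace (minus 0 0 / c) with 0 in HI by (rewrite minusR; field; auto). exact HI.
Qed.

End Orth.


Lemma exRInt_cont (f : R -> R) a b : (forall x, continuous f x) -> ex_RInt f a b.
Proof. intros H. apply (@ex_RInt_continuous R_CompleteNormedModule). intros; apply H. Qed.

Lemma RInt_pos (f : R -> R) a b x0 : a < x0 < b -> (forall x, continuous f x) ->
  (forall x, a <= x <= b -> 0 <= f x) -> 0 < f x0 -> 0 < RInt f a b.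
Proof.
  intros [Ha Hb] Hc Hnn Hp.
  destruct (cont_eps f x0 (Hc x0) (f x0 / 2) ltac:(lra)) as [d [Hd Hf]].
  set (e := Rmin (d / 2) (Rmin ((x0 - a) / 2) ((b - x0) / 2))).
  assert (He : 0 < e) by (unfold e; repeat apply Rmin_glb_lt; lra).
  assert (He1 : e <= d / 2) by (unfold e; apply Rmin_l).
  assert (He2 : e <= (x0 - a) / 2) by (unfold e; eapply Rle_trans; [apply Rmin_r|apply Rmin_l]).
  assert (He3 : e <= (b - x0) / 2) by (unfold e; eapply Rle_trans; [apply Rmin_r|apply Rmin_r]).
  set (c := x0 - e). set (c' := x0 + e).
  rewrite <- (RInt_Chasles f a c b) by (apply exRInt_cont; auto).
  rewrite <- (RInt_Chasles f c c' b) by (apply exRInt_cont; auto).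
  unfold plus; simpl.
  assert (0 <= RInt f a c).
  { apply RInt_ge_0; [unfold c; lra|apply exRInt_cont; auto|]. intros; apply Hnn. unfold c in *; lra. }
  assert (0 <= RInt f c' b).
  { apply RInt_ge_0; [unfold c'; lra|apply exRInt_cont; auto|]. intros; apply Hnn. unfold c' in *; lra. }
  assert (RInt (fun _ => f x0 / 2) c c' <= RInt f c c').
  { apply RInt_le; [unfold c, c'; lra|apply exRInt_cont; intros; apply continuous_const|apply exRInt_cont; auto|].
    intros x Hx. specialize (Hf x ltac:(unfold c, c' in *; apply Rabs_def1; lra)).
    apply Rabs_def2 in Hf. lra. }
  rewrite RInt_const in H1. unfold scal in H1; simpl in H1; unfold mult in H1; simpl in H1.
  assert (0 < (c' - c) * (f x0 / 2)) by (apply Rmult_lt_0_compat; unfold c, c'; lra).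
  lra.
Qed.

Section GNorth.
Variable k : nat.
Let lam := INR k + 1 / 2.
Let s := fun t => sin t ^ (S (2 * k)).

Lemma lam_pos : 0 < lam.
Proof. unfold lam. pose proof (pos_INR k). lra. Qed.

Lemma GN_cont n x : continuous (GN lam n) x.
Proof.
  unfold GN. apply (continuous_ext (fun t => Sf lam n t * / Sf lam n 0)); [intros; reflexivity|].
  apply cont_mult'; [apply Sf_cont|apply continuous_const].
Qed.

Lemma GN_orth n j : j <> n -> is_RInt (fun t => GN lam j t * (GN lam n t * s t)) 0 PI 0.
Proof.
  intros H. pose proof (orth_Sf k j n H) as HI. fold lam in HI. fold s in HI.
  pose proof (g1_pos lam j lam_pos). pose proof (g1_pos lam n lam_pos).
  rewrite <- Sf0_g1 in H0, H1.
  assert (HH : is_RInt (fun t => GN lam j t * (GN lam n t * s t)) 0 PI (0 / (Sf lam j 0 * Sf lam n 0))).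
  { apply is_RInt_unscale; [apply Rmult_integral_contrapositive_currified; lra|].
    eapply is_RInt_ext; [|exact HI]. intros x _.
    cbv beta. unfold GN. match goal with |- ?a = ?b => change (@eq R a b) end. field. split; lra. }
  replace (0 / (Sf lam j 0 * Sf lam n 0)) with 0 in HH by (field; split; lra). exact HH.
Qed.

Lemma GN_self n : exists h, h <> 0 /\ is_RInt (fun t => GN lam n t * (GN lam n t * s t)) 0 PI h.
Proof.
  set (f := fun t => GN lam n t * (GN lam n t * s t)).
  assert (Hc : forall x, continuous f x).
  { intros x. unfold f. apply cont_mult'; [apply GN_cont|].
    apply cont_mult'; [apply GN_cont|]. unfold s. apply sinpow_cont. }
  exists (RInt f 0 PI). split; [|apply (@RInt_correct R_CompleteNormedModule), exRInt_cont; auto].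
  apply Rgt_not_eq.
  destruct (cont_eps (GN lam n) 0 (GN_cont n 0) (1 / 2) ltac:(lra)) as [d [Hd Hf]].
  rewrite GN_0 in Hf by apply lam_pos.
  set (t0 := Rmin (d / 2) (PI / 2)).
  assert (Ht0 : 0 < t0) by (unfold t0; apply Rmin_glb_lt; pose proof PI_RGT_0; lra).
  assert (Ht1 : t0 <= PI / 2) by apply Rmin_r.
  assert (Ht2 : t0 <= d / 2) by apply Rmin_l.
  pose proof PI_RGT_0.
  apply (RInt_pos f 0 PI t0); auto; [lra| |].
  - intros x Hx. unfold f, s. pose proof (sin_ge_0 x ltac:(lra) ltac:(lra)).
    replace (GN lam n x * (GN lam n x * sin x ^ S (2 * k))) with
      ((GN lam n x * GN lam n x) * sin x ^ S (2 * k)) by ring.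
    apply Rmult_le_pos; [apply Rle_0_sqr|apply pow_le; auto].
  - unfold f, s. specialize (Hf t0 ltac:(rewrite Rminus_0_r, Rabs_right; lra)).
    apply Rabs_def2 in Hf.
    pose proof (sin_gt_0 t0 ltac:(lra) ltac:(lra)).
    replace (GN lam n t0 * (GN lam n t0 * sin t0 ^ S (2 * k))) with
      ((GN lam n t0 * GN lam n t0) * sin t0 ^ S (2 * k)) by ring.
    apply Rmult_lt_0_compat; [nra|apply pow_lt; auto].
Qed.

End GNorth.


Definition clampP (t : R) : R := Rmax 0 (Rmin t PI).

Lemma clampP_in t : 0 <= clampP t <= PI.
Proof.
  unfold clampP. pose proof PI_RGT_0. split; [apply Rmax_l|].
  apply Rmax_lub; [lra|apply Rmin_r].
Qed.

Lemma clampP_id t : 0 <= t <= PI -> clampP t = t.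
Proof.
  intros H. unfold clampP. rewrite Rmin_left by lra. rewrite Rmax_right by lra. auto.
Qed.

Lemma is_RInt_sum_fin (b : nat -> R) (G : nat -> R -> R) (w : R -> R) (I : nat -> R) N :
  (forall j, is_RInt (fun t => G j t * w t) 0 PI (I j)) ->
  is_RInt (fun t => sum_f_R0 (fun j => b j * G j t) N * w t) 0 PI (sum_f_R0 (fun j => b j * I j) N).
Proof.
  intros H. induction N as [|N IH].
  - simpl. pose proof (is_RInt_scal _ 0 PI (b 0%nat) _ (H 0%nat)) as H0.
    eapply is_RInt_ext; [|exact H0]. intros; unfold scal; simpl; unfold mult; simpl; ring.
  - simpl. pose proof (is_RInt_scal _ 0 PI (b (S N)) _ (H (S N))) as H0.
    pose proof (is_RInt_plus _ _ 0 PI _ _ IH H0) as H1.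
    eapply is_RInt_ext; [|exact H1]. intros; unfold scal, plus; simpl; unfold mult; simpl; ring.
Qed.

Lemma series_int (b : nat -> R) (G : nat -> R -> R) (psi w : R -> R) (I : nat -> R) (L : R) :
  (forall j, 0 <= b j) -> infinite_sum b 1 ->
  (forall j t, Rabs (G j t) <= 1) -> (forall t, Rabs (w t) <= 1) ->
  (forall t, 0 <= t <= PI -> infinite_sum (fun j => b j * G j t) (psi t)) ->
  (forall j, is_RInt (fun t => G j t * w t) 0 PI (I j)) ->
  (exists N0, forall N, (N0 <= N)%nat -> sum_f_R0 (fun j => b j * I j) N = L) ->
  is_RInt (fun t => psi t * w t) 0 PI L.
Proof.
  intros Hb Hs HG Hw Hpsi HI [N0 HL].
  set (fN := fun N t => sum_f_R0 (fun j => b j * G j (clampP t)) N * w t).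
  set (g := fun t => psi (clampP t) * w t).
  assert (HfN : forall N, is_RInt (fN N) 0 PI (sum_f_R0 (fun j => b j * I j) N)).
  { intros N. eapply is_RInt_ext; [|apply (is_RInt_sum_fin b G w I N HI)].
    intros x Hx. rewrite Rmin_left, Rmax_right in Hx by (pose proof PI_RGT_0; lra).
    unfold fN. rewrite clampP_id by lra. reflexivity. }
  assert (Hlim : filterlim fN Hierarchy.eventually (locally (g : fct_UniformSpace R R_CompleteNormedModule))).
  { apply filterlim_locally. intros eps.
    destruct (Hs eps (cond_pos eps)) as [N1 HN1].
    exists N1. intros N HN t.
    change (Rabs (fN N t - g t) < eps).
    unfold fN, g.
    pose proof (clampP_in t) as Hc.
    assert (Hm : Rabs (psi (clampP t) - SP (fun j x => b j * G j x) N (clampP t)) <= 1 - sum_f_R0 b N).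
    { apply sum_maj1; [exact (Hpsi _ Hc)|exact Hs|].
      intros j. rewrite Rabs_mult, Rabs_right by (apply Rle_ge, Hb).
      rewrite <- (Rmult_1_r (b j)) at 2. apply Rmult_le_compat_l; auto. }
    unfold SP in Hm.
    specialize (HN1 N HN). unfold Rdist in HN1.
    replace (sum_f_R0 (fun j => b j * G j (clampP t)) N * w t - psi (clampP t) * w t)
      with (- (psi (clampP t) - sum_f_R0 (fun j => b j * G j (clampP t)) N) * w t) by ring.
    rewrite Rabs_mult, Rabs_Ropp.
    pose proof (Hw t). pose proof (Rabs_pos (w t)).
    pose proof (Rabs_pos (psi (clampP t) - sum_f_R0 (fun j => b j * G j (clampP t)) N)).
    apply Rabs_def2 in HN1.
    assert (Rabs (psi (clampP t) - sum_f_R0 (fun j => b j * G j (clampP t)) N) * Rabs (w t)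
            <= Rabs (psi (clampP t) - sum_f_R0 (fun j => b j * G j (clampP t)) N)).
    { rewrite <- (Rmult_1_r (Rabs (psi (clampP t) - _))) at 2. apply Rmult_le_compat_l; auto. }
    lra. }
  destruct (filterlim_RInt fN 0 PI Hierarchy.eventually _ g _ HfN Hlim) as [If [HIf HgI]].
  assert (HL' : filterlim (fun N => sum_f_R0 (fun j => b j * I j) N) Hierarchy.eventually (locally L)).
  { apply (filterlim_ext_loc (fun _ => L)).
    - exists N0. intros N HN. symmetry. apply HL. lia.
    - apply filterlim_const. }
  pose proof (filterlim_locally_unique _ _ _ HIf HL') as E. subst If.
  eapply is_RInt_ext; [|exact HgI]. intros x Hx.
  rewrite Rmin_left, Rmax_right in Hx by (pose proof PI_RGT_0; lra).
  unfold g. rewrite clampP_id by lra. reflexivity.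
Qed.



Lemma gegen_norm_GN d j th : gegen_norm d j (cos th) = GN (lam_of d) j th.
Proof.
  unfold gegen_norm, GN. rewrite gegen_Sf. rewrite <- cos_0, gegen_Sf. reflexivity.
Qed.

Lemma lam_of_2k k : lam_of (2 * k + 2) = INR k + 1 / 2.
Proof. unfold lam_of. inr. field. Qed.

Lemma lam_of_2 : lam_of 2 = 1 / 2.
Proof. unfold lam_of. simpl. field. Qed.

Lemma sum_single (f : nat -> R) m N : (m <= N)%nat -> (forall j, j <> m -> f j = 0) ->
  sum_f_R0 f N = f m.
Proof.
  intros Hm H. induction N as [|N IH].
  - assert (m = 0)%nat by lia. subst. reflexivity.
  - destruct (Nat.eq_dec m (S N)) as [->|Hne].
    + simpl. rewrite sum_eq_R0; [ring|]. intros j Hj. apply H. lia.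
    + simpl. rewrite IH by lia. rewrite (H (S N)) by lia. ring.
Qed.

Lemma sum_swap (F : nat -> nat -> R) N K :
  sum_f_R0 (fun m => sum_f_R0 (fun i => F m i) K) N =
  sum_f_R0 (fun i => sum_f_R0 (fun m => F m i) N) K.
Proof.
  induction N as [|N IH]; simpl; [reflexivity|].
  rewrite IH, <- plus_sum. apply sum_eq. intros; reflexivity.
Qed.

Lemma sinpow_bound N t : Rabs (sin t ^ N) <= 1.
Proof.
  rewrite <- RPow_abs. pose proof (Rabs_pos (sin t)).
  assert (Rabs (sin t) <= 1) by (apply Rabs_le; apply SIN_bound).
  induction N; simpl; [lra|]. rewrite <- (Rmult_1_r 1). apply Rmult_le_compat; auto.
  apply pow_le; auto.
Qed.

Lemma infinite_sum_ext (f g : nat -> R) l : infinite_sum f l -> (forall j, f j = g j) ->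
  infinite_sum g l.
Proof.
  intros H E eps He. destruct (H eps He) as [N HN]. exists N. intros m Hm.
  rewrite <- (sum_eq f g m) by (intros; apply E). apply HN; auto.
Qed.

Theorem theorem2 (k : nat) (hk : (1 <= k)%nat) (psi : R -> R) (b2 bd : nat -> R) :
  Psi (2 * k + 2) psi ->
  schoenberg_coeffs 2 psi b2 ->
  schoenberg_coeffs (2 * k + 2) psi bd ->
  forall n : nat,
    bd n = sum_f_R0 (fun i => u_coef i n k * b2 (n + 2 * i)%nat) k.
Proof.
  intros _ [Hb2 [Hs2 He2]] [Hbd [Hsd Hed]] n.
  set (lam := INR k + 1 / 2).
  assert (Hlam : 0 < lam) by (unfold lam; pose proof (pos_INR k); lra).
  set (w := fun t => GN lam n t * sin t ^ S (2 * k)).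
  assert (Hw : forall t, Rabs (w t) <= 1).
  { intros t. unfold w. rewrite Rabs_mult. rewrite <- (Rmult_1_r 1).
    apply Rmult_le_compat; try apply Rabs_pos; [apply GN_bound; auto|apply sinpow_bound]. }
  destruct (GN_self k n) as [h [Hh HhI]]. fold lam in HhI.
  set (Id := fun j => if Nat.eq_dec j n then h else 0).
  assert (HId : forall j, is_RInt (fun t => GN lam j t * w t) 0 PI (Id j)).
  { intros j. unfold Id, w. destruct (Nat.eq_dec j n) as [->|Hne].
    - eapply is_RInt_ext; [|exact HhI]. intros; cbv beta; Req; ring.
    - pose proof (GN_orth k n j Hne) as H. fold lam in H.
      eapply is_RInt_ext; [|exact H]. intros; cbv beta; Req; ring. }
  assert (Hd : is_RInt (fun t => psi t * w t) 0 PI (bd n * h)).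
  { apply (series_int bd (GN lam) psi w Id); auto.
    - intros; apply GN_bound; auto.
    - intros t Ht. eapply infinite_sum_ext; [exact (Hed t Ht)|].
      intros j. cbv beta. rewrite gegen_norm_GN, lam_of_2k. reflexivity.
    - exists n. intros N HN. rewrite (sum_single _ n N HN).
      + unfold Id. destruct (Nat.eq_dec n n); [ring|congruence].
      + intros j Hj. unfold Id. destruct (Nat.eq_dec j n); [congruence|ring]. }
  set (J := fun m => sum_f_R0 (fun i => Wc k m i * Id (m - 2 * i)%nat) k).
  assert (HJ : forall m, is_RInt (fun t => GN (1 / 2) m t * w t) 0 PI (J m)).
  { intros m. unfold J.
    pose proof (is_RInt_sum_fin (Wc k m) (fun i t => GN lam (m - 2 * i)%nat t) w
      (fun i => Id (m - 2 * i)%nat) k (fun i => HId (m - 2 * i)%nat)) as H.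
    eapply is_RInt_ext; [|exact H]. intros x _. cbv beta.
    rewrite (connection k m x). reflexivity. }
  assert (H2 : is_RInt (fun t => psi t * w t) 0 PI
      (h * sum_f_R0 (fun i => u_coef i n k * b2 (n + 2 * i)%nat) k)).
  { apply (series_int b2 (GN (1 / 2)) psi w J); auto.
    - intros; apply GN_bound; lra.
    - intros t Ht. eapply infinite_sum_ext; [exact (He2 t Ht)|].
      intros j. cbv beta. rewrite gegen_norm_GN, lam_of_2. reflexivity.
    - exists (n + 2 * k)%nat. intros N HN. unfold J.
      transitivity (sum_f_R0 (fun m => sum_f_R0 (fun i => b2 m * (Wc k m i * Id (m - 2 * i)%nat)) k) N).
      { apply sum_eq. intros m _. rewrite scal_sum. apply sum_eq. intros; ring. }
      rewrite sum_swap. rewrite scal_sum. apply sum_eq. intros i Hi.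
      rewrite (sum_single _ (n + 2 * i) N); [|lia|].
      2:{ intros m Hm. unfold Id.
          destruct (Nat.eq_dec (m - 2 * i) n); [|ring].
          unfold Wc. destruct (Nat.leb_spec (2 * i) m); [lia|].
          rewrite Bool.andb_false_r. ring. }
      unfold Id. replace (n + 2 * i - 2 * i)%nat with n by lia.
      destruct (Nat.eq_dec n n); [|congruence].
      unfold Wc. rewrite (proj2 (Nat.leb_le i k)) by lia.
      rewrite (proj2 (Nat.leb_le (2 * i) (n + 2 * i))) by lia. cbn [andb].
      replace (n + 2 * i - 2 * i)%nat with n by lia. ring. }
  pose proof (is_RInt_unique _ _ _ _ Hd) as E1.
  pose proof (is_RInt_unique _ _ _ _ H2) as E2.
  rewrite E1 in E2. apply (Rmult_eq_reg_l h); auto. rewrite <- E2. ring.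
Qed.
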